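(* Let $\mathfrak g$ be a nonsemisimple complex Lie algebra, $\mathfrak p$ a nonperfect ideal of $\mathfrak g$, and $\phi:\mathfrak p\to\mathbb C$ a Lie algebra homomorphism. Then every nonzero $\mathfrak p$-invariant subspace $M$ of $W(\phi)$ contains a nonzero vector $v$ with $pv=\phi(p)v$ for all $p\in\mathfrak p$.
   Context: A Lie algebra homomorphism $\phi:\mathfrak p\to\mathbb C$ is a linear map vanishing on $[\mathfrak p,\mathfrak p]$. Let $\mathbb C w_\phi$ be the one-dimensional $\mathfrak p$-module with $pw_\phi=\phi(p)w_\phi$, and $W(\phi)=\mathcal U(\mathfrak g)\otimes_{\mathcal U(\mathfrak p)}\mathbb C w_\phi$. *)

(* Defs.v *)
From mathcomp Require Import all_boot all_order all_algebra.
From mathcomp Require Import reals complex.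

Set Implicit Arguments.
Unset Strict Implicit.
Unset Printing Implicit Defensive.

Import Order.TTheory GRing.Theory Num.Theory.
Local Open Scope ring_scope.

(* A finite-dimensional Lie algebra over a field F is modelled on F^n = 'rV[F]_n
   (with standard basis e_i = delta_mx 0 i) together with a bracket [br]. *)
Section LieDefs.
Variables (F : fieldType) (n : nat).
Local Notation V := 'rV[F]_n.

Definition is_subspace (S : V -> Prop) : Prop :=
  [/\ S 0, (forall x y, S x -> S y -> S (x + y)) & (forall (a : F) x, S x -> S (a *: x))].

Definition is_lie_bracket (br : V -> V -> V) : Prop :=
  [/\ (forall (a : F) x y z, br (a *: x + y) z = a *: br x z + br y z),
      (forall (a : F) x y z, br z (a *: x + y) = a *: br z x + br z y),
      (forall x, br x x = 0) &
      (forall x y z, br x (br y z) + br y (br z x) + br z (br x y) = 0)].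

Inductive derived (br : V -> V -> V) (S : V -> Prop) : V -> Prop :=
| derived_br x y : S x -> S y -> derived br S (br x y)
| derived_0 : derived br S 0
| derived_add x y : derived br S x -> derived br S y -> derived br S (x + y)
| derived_scale (a : F) x : derived br S x -> derived br S (a *: x).

Fixpoint dseries (br : V -> V -> V) (k : nat) (S : V -> Prop) : V -> Prop :=
  match k with 0 => S | k'.+1 => derived br (dseries br k' S) end.

Definition is_ideal (br : V -> V -> V) (I : V -> Prop) : Prop :=
  is_subspace I /\ (forall x y, I y -> I (br x y)).

Definition is_solvable (br : V -> V -> V) (I : V -> Prop) : Prop :=
  exists k, forall x, dseries br k I x -> x = 0.

Definition is_semisimple (br : V -> V -> V) : Prop :=
  forall I, is_ideal br I -> is_solvable br I -> forall x, I x -> x = 0.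

Definition is_perfect (br : V -> V -> V) (P : V -> Prop) : Prop :=
  forall x, P x -> derived br P x.

(* a Lie algebra homomorphism p -> F: linear on p, vanishing on [p, p]
   (only the values of phi on p matter) *)
Definition is_lie_char (br : V -> V -> V) (P : V -> Prop) (phi : V -> F) : Prop :=
  (forall (a : F) x y, P x -> P y -> phi (a *: x + y) = a * phi x + phi y) /\
  (forall x y, P x -> P y -> phi (br x y) = 0).

(* Tensor algebra T(g): noncommutative polynomials in the basis letters,
   represented as finitely supported functions from words to F. *)
Definition word := seq 'I_n.
Definition ser := word -> F.

Definition is_poly (f : ser) : Prop :=
  exists s : seq word, forall w, w \notin s -> f w = 0.

Definition tzero : ser := fun _ => 0.
Definition tone : ser := fun w => (w == [::])%:R.
Definition letter (i : 'I_n) : ser := fun w => (w == [:: i])%:R.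
Definition tadd (f g : ser) : ser := fun w => f w + g w.
Definition tscale (a : F) (f : ser) : ser := fun w => a * f w.
Definition tsub (f g : ser) : ser := fun w => f w - g w.
Definition tmul (f g : ser) : ser :=
  fun w => \sum_(k < (size w).+1) f (take k w) * g (drop k w).
Definition emb (x : V) : ser := fun w => \sum_(i < n) x 0 i * letter i w.

Definition basis_vec (i : 'I_n) : V := delta_mx 0 i.

(* two-sided ideal of T(g) generated by x y - y x - [x, y]; T(g)/Uideal = U(g) *)
Inductive Uideal (br : V -> V -> V) : ser -> Prop :=
| U_gen i j : Uideal br (tsub (tsub (tmul (letter i) (letter j)) (tmul (letter j) (letter i)))
                              (emb (br (basis_vec i) (basis_vec j))))
| U_0 : Uideal br tzero
| U_add f g : Uideal br f -> Uideal br g -> Uideal br (tadd f g)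
| U_scale (a : F) f : Uideal br f -> Uideal br (tscale a f)
| U_lmul i f : Uideal br f -> Uideal br (tmul (letter i) f)
| U_rmul i f : Uideal br f -> Uideal br (tmul f (letter i)).

(* kernel of T(g) -> W(phi) = U(g) (x)_{U(p)} C w_phi, i.e. the preimage in T(g)
   of the left ideal U(g){ p - phi(p) : p in p } *)
Inductive Wker (br : V -> V -> V) (P : V -> Prop) (phi : V -> F) : ser -> Prop :=
| W_U f : Uideal br f -> Wker br P phi f
| W_gen p : P p -> Wker br P phi (tsub (emb p) (tscale (phi p) tone))
| W_add f g : Wker br P phi f -> Wker br P phi g -> Wker br P phi (tadd f g)
| W_scale (a : F) f : Wker br P phi f -> Wker br P phi (tscale a f)
| W_lmul i f : Wker br P phi f -> Wker br P phi (tmul (letter i) f).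

(* subspaces of W(phi) correspond to subspaces M of T(g) containing Wker *)
Definition is_tsubspace (M : ser -> Prop) : Prop :=
  [/\ (forall f, M f -> is_poly f), M tzero,
      (forall f g, M f -> M g -> M (tadd f g)) &
      (forall (a : F) f, M f -> M (tscale a f))].

End LieDefs.

(* Main.v *)
Require Import Defs.
From mathcomp Require Import all_boot all_order all_algebra.
From Stdlib Require Import FunctionalExtensionality Classical.
From mathcomp Require Import ring.
Set Implicit Arguments. Unset Strict Implicit. Unset Printing Implicit Defensive.
Import GRing.Theory.
Local Open Scope ring_scope.

Section Alg.
Variables (F : fieldType) (n : nat).
Local Notation ser := (ser F n).
Local Notation letter := (letter F).
Local Notation tone := (tone F (n:=n)).
Local Notation tzero := (@tzero F n).

Definition shift (a : ser) (x : 'I_n) : ser := fun w => a (x :: w).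

Lemma tmul_nil (a b : ser) : tmul a b [::] = a [::] * b [::].
Proof. by rewrite /tmul big_ord_recl big_ord0 addr0. Qed.

Lemma tmul_cons (a b : ser) x w :
  tmul a b (x :: w) = a [::] * b (x :: w) + tmul (shift a x) b w.
Proof. by rewrite /tmul /= big_ord_recl. Qed.

Lemma tmulDl (a b c : ser) w : tmul (tadd a b) c w = tmul a c w + tmul b c w.
Proof. by rewrite /tmul -big_split; apply: eq_bigr => k _; rewrite /tadd mulrDl. Qed.
Lemma tmulDr (a b c : ser) w : tmul a (tadd b c) w = tmul a b w + tmul a c w.
Proof. by rewrite /tmul -big_split; apply: eq_bigr => k _; rewrite /tadd mulrDr. Qed.
Lemma tmulZl (a : F) (b c : ser) w : tmul (tscale a b) c w = a * tmul b c w.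
Proof. by rewrite /tmul mulr_sumr; apply: eq_bigr => k _; rewrite /tscale mulrA. Qed.
Lemma tmulZr (a : F) (b c : ser) w : tmul b (tscale a c) w = a * tmul b c w.
Proof. by rewrite /tmul mulr_sumr; apply: eq_bigr => k _; rewrite /tscale mulrCA. Qed.
Lemma tmulBl (a b c : ser) w : tmul (tsub a b) c w = tmul a c w - tmul b c w.
Proof. by rewrite /tmul -sumrB; apply: eq_bigr => k _; rewrite /tsub mulrBl. Qed.
Lemma tmulBr (a b c : ser) w : tmul a (tsub b c) w = tmul a b w - tmul a c w.
Proof. by rewrite /tmul -sumrB; apply: eq_bigr => k _; rewrite /tsub mulrBr. Qed.
Lemma tmul0r (c : ser) w : tmul tzero c w = 0.
Proof. by rewrite /tmul big1 // => k _; rewrite /tzero mul0r. Qed.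
Lemma tmulr0 (c : ser) w : tmul c tzero w = 0.
Proof. by rewrite /tmul big1 // => k _; rewrite /tzero mulr0. Qed.

Lemma tmul_suml (c : 'I_n -> F) (G : 'I_n -> ser) (b : ser) w :
  tmul (fun v => \sum_(j < n) c j * G j v) b w = \sum_(j < n) c j * tmul (G j) b w.
Proof.
rewrite /tmul. under eq_bigr do rewrite mulr_suml.
rewrite exchange_big /=; apply: eq_bigr => j _; rewrite mulr_sumr.
by apply: eq_bigr => k _; rewrite mulrA.
Qed.
Lemma tmul_sumr (c : 'I_n -> F) (G : 'I_n -> ser) (b : ser) w :
  tmul b (fun v => \sum_(j < n) c j * G j v) w = \sum_(j < n) c j * tmul b (G j) w.
Proof.
rewrite /tmul. under eq_bigr do rewrite mulr_sumr.
rewrite exchange_big /=; apply: eq_bigr => j _; rewrite mulr_sumr.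
by apply: eq_bigr => k _; rewrite mulrCA.
Qed.

Lemma tmul_ext (a a' b : ser) w : (forall v, a v = a' v) -> tmul a b w = tmul a' b w.
Proof. by move=> h; rewrite /tmul; apply: eq_bigr => k _; rewrite h. Qed.

Lemma tmulA (a b c : ser) w : tmul (tmul a b) c w = tmul a (tmul b c) w.
Proof.
elim: w a b => [|x w IH] a b; first by rewrite !tmul_nil mulrA.
rewrite !tmul_cons tmul_nil.
rewrite (@tmul_ext _ (tadd (tscale (a [::]) (shift b x)) (tmul (shift a x) b))); last first.
  by move=> v; rewrite /shift tmul_cons.
rewrite tmulDl tmulZl IH mulrDr !addrA mulrA.
by [].
Qed.

Lemma tmul1r (b : ser) w : tmul tone b w = b w.
Proof.
case: w => [|x w]; first by rewrite tmul_nil /tone /= mul1r.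
rewrite tmul_cons /tone /= mul1r (@tmul_ext _ tzero) ?tmul0r ?addr0 //.
Qed.
Lemma tmulr1 (a : ser) w : tmul a tone w = a w.
Proof.
elim: w a => [|x w IH] a; first by rewrite tmul_nil /tone /= mulr1.
by rewrite tmul_cons /tone /= mulr0 add0r IH.
Qed.

Lemma tmul_letter i (f : ser) w :
  tmul (letter i) f w = if w is j :: w' then (j == i)%:R * f w' else 0.
Proof.
case: w => [|j w]; first by rewrite tmul_nil /letter /= mul0r.
rewrite tmul_cons /letter /= mul0r add0r.
rewrite (@tmul_ext _ (tscale (j == i)%:R tone)) ?tmulZl ?tmul1r //.
by move=> v; rewrite /shift /tscale /tone eqseq_cons andbC; case: (v == [::]); case: (j == i);
  rewrite /= ?mulr1 ?mulr0.
Qed.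
End Alg.

Section Lie.
Variables (F : fieldType) (n : nat).
Local Notation ser := (ser F n).
Local Notation V := 'rV[F]_n.
Local Notation letter := (letter F).
Local Notation tone := (tone F (n:=n)).
Local Notation tzero := (@tzero F n).
Variables (br : V -> V -> V) (P : V -> Prop) (phi : V -> F).
Hypothesis hbr : is_lie_bracket br.
Hypothesis hP : is_ideal br P.
Local Notation K := (Wker br P phi).
Local Notation U := (Uideal br).

Lemma closed_sum (Q : ser -> Prop) : Q tzero -> (forall f g, Q f -> Q g -> Q (tadd f g)) ->
  (forall a f, Q f -> Q (tscale a f)) ->
  forall (s : seq 'I_n) (c : 'I_n -> F) (G : 'I_n -> ser), (forall j, Q (G j)) ->
  Q (fun w => \sum_(j <- s) c j * G j w).
Proof.
move=> h0 hD hZ; elim=> [|j s IH] c G hG.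
  by have -> : (fun w : word n => \sum_(j <- [::]) c j * G j w) = tzero
    by apply: functional_extensionality => w; rewrite big_nil.
have -> : (fun w => \sum_(j0 <- j :: s) c j0 * G j0 w) =
   tadd (tscale (c j) (G j)) (fun w => \sum_(j0 <- s) c j0 * G j0 w).
  by apply: functional_extensionality => w; rewrite big_cons.
by apply: hD; [apply: hZ | apply: IH].
Qed.

Lemma K_sum (s : seq 'I_n) (c : 'I_n -> F) (G : 'I_n -> ser) : (forall j, K (G j)) ->
  K (fun w => \sum_(j <- s) c j * G j w).
Proof. apply: closed_sum; [exact: W_U (U_0 _) | exact: W_add | exact: W_scale]. Qed.
Lemma U_sum (s : seq 'I_n) (c : 'I_n -> F) (G : 'I_n -> ser) : (forall j, U (G j)) ->
  U (fun w => \sum_(j <- s) c j * G j w).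
Proof. apply: closed_sum; [exact: U_0 | exact: U_add | exact: U_scale]. Qed.

Lemma ser_eq (f g : ser) : (forall w, f w = g w) -> f = g.
Proof. exact: functional_extensionality. Qed.

Lemma K_emb q f : K f -> K (tmul (emb q) f).
Proof.
move=> hf.
have -> : tmul (emb q) f = fun w => \sum_(j < n) q 0 j * tmul (letter j) f w.
  by apply: ser_eq => w; rewrite /emb tmul_suml.
by apply: K_sum => j; apply: W_lmul.
Qed.

Lemma K_sub f g : K f -> K g -> K (tsub f g).
Proof.
move=> hf hg; have -> : tsub f g = tadd f (tscale (-1) g).
  by apply: ser_eq => w; rewrite /tsub /tadd /tscale mulN1r.
by apply: W_add => //; apply: W_scale.
Qed.

Definition D q (f : ser) : ser := tsub (tmul (emb q) f) (tscale (phi q) f).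

Lemma K_D q f : K f -> K (D q f).
Proof. by move=> hf; apply: K_sub; [apply: K_emb | apply: W_scale]. Qed.

Lemma D_add q f g : D q (tadd f g) = tadd (D q f) (D q g).
Proof. apply: ser_eq => w; rewrite /D /tsub tmulDr /tadd /tscale; ring. Qed.
Lemma D_scale q a f : D q (tscale a f) = tscale a (D q f).
Proof. apply: ser_eq => w; rewrite /D /tsub tmulZr /tscale; ring. Qed.
Lemma D_sub q f g : D q (tsub f g) = tsub (D q f) (D q g).
Proof. apply: ser_eq => w; rewrite /D /tsub tmulBr /tsub /tscale; ring. Qed.
Lemma D_zero q : D q tzero = tzero.
Proof. apply: ser_eq => w; rewrite /D /tsub tmulr0 /tscale /tzero; ring. Qed.
Lemma D_one q : D q tone = tsub (emb q) (tscale (phi q) tone).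
Proof. apply: ser_eq => w; rewrite /D /tsub tmulr1 //. Qed.

Lemma tmul_embl q f w : tmul (emb q) f w = \sum_(j < n) q 0 j * tmul (letter j) f w.
Proof. by rewrite /emb tmul_suml. Qed.
Lemma tmul_embr q f w : tmul f (emb q) w = \sum_(j < n) q 0 j * tmul f (letter j) w.
Proof. by rewrite /emb tmul_sumr. Qed.

Lemma br0l z : br 0 z = 0.
Proof.
case: hbr => hl _ _ _; have := hl 1 0 0 z; rewrite !scale1r addr0.
move=> h; have : br 0 z + br 0 z = br 0 z + 0 by rewrite addr0 -h.
by move/addrI.
Qed.
Lemma br0r z : br z 0 = 0.
Proof.
case: hbr => _ hr _ _; have := hr 1 0 0 z; rewrite !scale1r addr0.
move=> h; have : br z 0 + br z 0 = br z 0 + 0 by rewrite addr0 -h.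
by move/addrI.
Qed.
Lemma brDl x y z : br (x + y) z = br x z + br y z.
Proof. by case: hbr => hl _ _ _; have := hl 1 x y z; rewrite !scale1r. Qed.
Lemma brDr x y z : br z (x + y) = br z x + br z y.
Proof. by case: hbr => _ hr _ _; have := hr 1 x y z; rewrite !scale1r. Qed.
Lemma brZl a x z : br (a *: x) z = a *: br x z.
Proof. by case: hbr => hl _ _ _; have := hl a x 0 z; rewrite !addr0 br0l addr0. Qed.
Lemma brN x y : br x y = - br y x.
Proof.
case: hbr => _ _ halt _; have := halt (x + y).
rewrite brDl !brDr !halt add0r addr0 => /eqP; rewrite addr_eq0 => /eqP //.
Qed.

Lemma br_sum q z : br q z = \sum_(j < n) q 0 j *: br (basis_vec F j) z.
Proof.
have hq := row_sum_delta q; rewrite [X in br X z]hq.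
apply: (big_ind2 (fun x y => br x z = y)); first exact: br0l.
  by move=> x1 x2 y1 y2 <- <-; rewrite brDl.
by move=> j _; rewrite brZl.
Qed.

Lemma emb_sum (c : 'I_n -> F) (v : 'I_n -> V) w :
  emb (\sum_(j < n) c j *: v j) w = \sum_(j < n) c j * emb (v j) w.
Proof.
rewrite /emb. under eq_bigr do rewrite summxE mulr_suml.
rewrite exchange_big /=; apply: eq_bigr => j _; rewrite mulr_sumr.
by apply: eq_bigr => k _; rewrite mxE mulrA.
Qed.

Definition ucomm q i : ser := tsub (tsub (tmul (emb q) (letter i)) (tmul (letter i) (emb q)))
   (emb (br q (basis_vec F i))).

Lemma U_ucomm q i : U (ucomm q i).
Proof.
have -> : ucomm q i = fun w => \sum_(j < n) q 0 j *
   tsub (tsub (tmul (letter j) (letter i)) (tmul (letter i) (letter j)))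
     (emb (br (basis_vec F j) (basis_vec F i))) w.
  apply: ser_eq => w; rewrite /ucomm /tsub tmul_embl tmul_embr br_sum emb_sum.
  rewrite -!sumrB; apply: eq_bigr => j _; ring.
by apply: U_sum => j; apply: U_gen.
Qed.

Lemma D_lmul q i f : D q (tmul (letter i) f) =
  tadd (tadd (tadd (tmul (letter i) (D q f)) (D (br q (basis_vec F i)) f))
     (tscale (phi (br q (basis_vec F i))) f)) (tmul (ucomm q i) f).
Proof.
apply: ser_eq => w; rewrite /D /ucomm /tadd tmulBr tmulZr !tmulBl !tmulA /tsub /tscale; ring.
Qed.

Lemma P_br q i : P q -> P (br q (basis_vec F i)).
Proof.
case: hP => [[_ _ hZ] hI] hq; rewrite brN -scaleN1r; apply: hZ; exact: hI.
Qed.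

Inductive St : nat -> ser -> Prop :=
| St_one m : St m.+1 tone
| St_zero m : St m tzero
| St_add m f g : St m f -> St m g -> St m (tadd f g)
| St_scale m a f : St m f -> St m (tscale a f)
| St_lmul m i f : St m f -> St m.+1 (tmul (letter i) f).

Lemma St_mono m f : St m f -> St m.+1 f.
Proof. elim=> *; by constructor. Qed.

Lemma St0 m f : St m f -> m = 0%N -> f = tzero.
Proof.
elim=> //.
- by move=> m0 f0 g _ IH1 _ IH2 h; rewrite IH1 // IH2 //; apply: ser_eq => w; rewrite /tadd /tzero addr0.
- by move=> m0 a f0 _ IH h; rewrite IH //; apply: ser_eq => w; rewrite /tscale /tzero mulr0.
Qed.

Lemma U_St m g : St m g -> forall u, U u -> U (tmul u g).
Proof.
elim=> {m g}.
- move=> m u hu; rewrite (_ : tmul u tone = u) //; apply: ser_eq => w; exact: tmulr1.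
- move=> m u hu; rewrite (_ : tmul u tzero = tzero); first exact: U_0.
  apply: ser_eq => w; exact: tmulr0.
- move=> m f g _ IH1 _ IH2 u hu.
  have -> : tmul u (tadd f g) = tadd (tmul u f) (tmul u g) by apply: ser_eq => w; rewrite tmulDr.
  by apply: U_add; [apply: IH1 | apply: IH2].
- move=> m a f _ IH u hu.
  have -> : tmul u (tscale a f) = tscale a (tmul u f) by apply: ser_eq => w; rewrite tmulZr.
  by apply: U_scale; apply: IH.
- move=> m i f _ IH u hu.
  have -> : tmul u (tmul (letter i) f) = tmul (tmul u (letter i)) f by apply: ser_eq => w; rewrite tmulA.
  by apply: IH; apply: U_rmul.
Qed.

Definition Fil m f := exists g, St m g /\ K (tsub f g).

Lemma Fil_K m f : K f -> Fil m f.
Proof.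
move=> hf; exists tzero; split; first exact: St_zero.
by have -> : tsub f tzero = f by apply: ser_eq => w; rewrite /tsub /tzero subr0.
Qed.
Lemma Fil_St m f : St m f -> Fil m f.
Proof.
move=> hf; exists f; split=> //.
have -> : tsub f f = tzero by apply: ser_eq => w; rewrite /tsub /tzero subrr.
exact: W_U (U_0 _).
Qed.
Lemma Fil_add m f g : Fil m f -> Fil m g -> Fil m (tadd f g).
Proof.
move=> [f' [h1 h2]] [g' [h3 h4]]; exists (tadd f' g'); split; first exact: St_add.
have -> : tsub (tadd f g) (tadd f' g') = tadd (tsub f f') (tsub g g').
  by apply: ser_eq => w; rewrite /tsub /tadd; ring.
exact: W_add.
Qed.
Lemma Fil_scale m a f : Fil m f -> Fil m (tscale a f).
Proof.
move=> [f' [h1 h2]]; exists (tscale a f'); split; first exact: St_scale.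
have -> : tsub (tscale a f) (tscale a f') = tscale a (tsub f f').
  by apply: ser_eq => w; rewrite /tsub /tscale; ring.
exact: W_scale.
Qed.
Lemma Fil_lmul m i f : Fil m f -> Fil m.+1 (tmul (letter i) f).
Proof.
move=> [f' [h1 h2]]; exists (tmul (letter i) f'); split; first exact: St_lmul.
have -> : tsub (tmul (letter i) f) (tmul (letter i) f') = tmul (letter i) (tsub f f').
  by apply: ser_eq => w; rewrite tmulBr.
exact: W_lmul.
Qed.
Lemma Fil_mono m f : Fil m f -> Fil m.+1 f.
Proof. by move=> [f' [h1 h2]]; exists f'; split=> //; apply: St_mono. Qed.
Lemma Fil_pred m f : Fil m.-1 f -> Fil m f.
Proof. by case: m => //= m; apply: Fil_mono. Qed.
Lemma Fil0 f : Fil 0 f -> K f.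
Proof.
move=> [f' [h1 h2]]; move: h2; rewrite (St0 h1) //.
by have -> : tsub f tzero = f by apply: ser_eq => w; rewrite /tsub /tzero subr0.
Qed.

Lemma St_D m g : St m g -> forall q, P q -> Fil m.-1 (D q g).
Proof.
elim=> {m g}.
- move=> m q hq; rewrite D_one; apply: Fil_K; exact: W_gen.
- by move=> m q hq; rewrite D_zero; apply: Fil_K; exact: W_U (U_0 _).
- by move=> m f g _ IH1 _ IH2 q hq; rewrite D_add; apply: Fil_add; [apply: IH1 | apply: IH2].
- by move=> m a f _ IH q hq; rewrite D_scale; apply: Fil_scale; apply: IH.
- move=> m i f hf IH q hq /=; rewrite D_lmul.
  apply: Fil_add; last by apply: Fil_K; apply: W_U; apply: U_St hf _ (U_ucomm q i).
  apply: Fil_add; last by apply: Fil_scale; apply: Fil_St.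
  apply: Fil_add; last by apply: Fil_pred; apply: IH; apply: P_br.
  case: m hf IH => [|m] hf IH.
    by apply: Fil_K; apply: W_lmul; apply: Fil0; apply: IH.
  by apply: Fil_lmul; apply: IH.
Qed.

Lemma Fil_D m f q : Fil m f -> P q -> Fil m.-1 (D q f).
Proof.
move=> [g [h1 h2]] hq.
have -> : D q f = tadd (D q g) (D q (tsub f g)).
  by rewrite D_sub; apply: ser_eq => w; rewrite /tadd /tsub; ring.
by apply: Fil_add; [apply: St_D | apply: Fil_K; apply: K_D].
Qed.
Definition wordser (v : word n) : ser := foldr (fun i f => tmul (letter i) f) tone v.

Lemma wordserE v w : wordser v w = (w == v)%:R.
Proof.
elim: v w => [|i v IH] w //=.
rewrite tmul_letter; case: w => [|j w] //.
by rewrite IH eqseq_cons; case: (j == i); case: (w == v); rewrite /= ?mulr1 ?mulr0 ?mul0r.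
Qed.

Lemma St_word v m : (size v < m)%N -> St m (wordser v).
Proof.
elim: v m => [|i v IH] [|m] //= h.
  exact: St_one.
by apply: St_lmul; apply: IH.
Qed.

Lemma St_poly (s : seq (word n)) : forall (f : ser) m, (forall w, w \notin s -> f w = 0) ->
  (forall w, w \in s -> (size w < m)%N) -> St m f.
Proof.
elim: s => [|v s IH] f m h1 h2.
  rewrite (_ : f = tzero); first exact: St_zero.
  by apply: ser_eq => w; rewrite h1.
rewrite (_ : f = tadd (tscale (f v) (wordser v)) (fun w => if w == v then 0 else f w)).
  apply: St_add; first by apply: St_scale; apply: St_word; apply: h2; rewrite inE eqxx.
  apply: IH.
    by move=> w hw; case: ifP => // /negbT hwv; apply: h1; rewrite inE negb_or hwv.
  by move=> w hw; apply: h2; rewrite inE hw orbT.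
apply: ser_eq => w; rewrite /tadd /tscale wordserE.
by case: eqP => [->|_]; rewrite ?mulr1 ?addr0 ?mulr0 ?add0r.
Qed.

Lemma main_gen (M : ser -> Prop) : is_tsubspace M -> (forall f, K f -> M f) ->
  (forall p f, P p -> M f -> M (tmul (emb p) f)) -> (exists f, M f /\ ~ K f) ->
  exists v, [/\ M v, ~ K v & forall p, P p -> K (tsub (tmul (emb p) v) (tscale (phi p) v))].
Proof.
rewrite /is_tsubspace => -[hpoly hM0 hMD hMZ] hK hMe [f0 [hf0 hnf0]].
have hMD' p f : P p -> M f -> M (D p f).
  move=> hp hf; rewrite (_ : D p f = tadd (tmul (emb p) f) (tscale (-1) (tscale (phi p) f))).
    apply: hMD; first by apply: hMe.
    by apply: (hMZ); apply: (hMZ).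
  by apply: ser_eq => w; rewrite /D /tsub /tadd /tscale mulN1r.
have key : forall k v, M v -> ~ K v -> Fil k v ->
  exists v, [/\ M v, ~ K v & forall p, P p -> K (D p v)].
  elim=> [|k IH] v hv hnv hF; first by case: hnv; apply: Fil0.
  case: (classic (exists p, P p /\ ~ K (D p v))) => [[p [hp hnp]]|hno].
    apply: (IH (D p v)) => //; first exact: hMD'.
    exact: (Fil_D hF hp).
  exists v; split=> // p hp; apply: NNPP => hn; apply: hno; by exists p.
case: (hpoly _ hf0) => s hs.
apply: (key (\max_(w <- s) size w).+1 f0) => //.
apply: Fil_St; apply: (St_poly hs) => w hw; rewrite ltnS; exact: leq_bigmax_seq.
Qed.
End Lie.

From mathcomp Require Import reals complex.
Unset Implicit Arguments.

Theorem proposition3p2 (R : realType) (n : nat)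
  (br : 'rV[R[i]]_n -> 'rV[R[i]]_n -> 'rV[R[i]]_n)
  (P : 'rV[R[i]]_n -> Prop) (phi : 'rV[R[i]]_n -> R[i]) :
  is_lie_bracket br ->
  ~ is_semisimple br ->
  is_ideal br P ->
  ~ is_perfect br P ->
  is_lie_char br P phi ->
  forall M : ser R[i] n -> Prop,
    is_tsubspace M ->
    (forall f, Wker br P phi f -> M f) ->
    (forall p f, P p -> M f -> M (tmul (emb p) f)) ->
    (exists f, M f /\ ~ Wker br P phi f) ->
    exists v, [/\ M v, ~ Wker br P phi v &
      forall p, P p -> Wker br P phi (tsub (tmul (emb p) v) (tscale (phi p) v))].
Proof.
by move=> hbr _ hP _ _; apply: main_gen.
Qed.
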